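(* Let $u:(0,\infty)\to(0,\infty)$ be a stable function bounded from above by some $u^\infty>0$. For every $x>0$ the equation $\eta=\frac{1}{\frac1x+u(\eta)}$, $\eta>0$, admits a unique solution, denoted $\eta(x)$, and the resulting mapping $\eta:(0,\infty)\to(0,\infty)$ is stable.
   Context: A function $f:(0,\infty)\to(0,\infty)$ is stable if $|f(x)-f(y)|\le\sqrt{\frac{f(x)f(y)}{xy}}|x-y|$ for all $x,y>0$. *)

(* Defs.v *)
(* concrete reals R. Functions (0,oo)->(0,oo) are modeled as
   f : R -> R together with positivity on (0,oo); values outside (0,oo) are irrelevant. *)
From Stdlib Require Import Reals Lra.
Open Scope R_scope.

Definition pos_fun (f : R -> R) : Prop :=
  forall x, 0 < x -> 0 < f x.

Definition stable (f : R -> R) : Prop :=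
  pos_fun f /\
  forall x y, 0 < x -> 0 < y ->
    Rabs (f x - f y) <= sqrt (f x * f y / (x * y)) * Rabs (x - y).

(* Main.v *)
Require Import Defs.
From Stdlib Require Import Reals Lra Psatz Ranalysis5 ClassicalEpsilon.
Open Scope R_scope.

Lemma ratio_of_prod x y A B : 0 < x -> 0 < y -> 0 < A -> 0 < B -> y <= x ->
  (x*A - y*B)*(y*A - x*B) <= 0 -> y*B <= x*A /\ y*A <= x*B.
Proof.
  intros hx hy hA hB hxy hp.
  assert (H1 : y*B <= x*A).
  { destruct (Rle_lt_dec (y*B) (x*A)) as [h|h]; auto.
    assert (y*A - x*B >= 0) by nra.
    assert (A >= B) by nra. nra. }
  split; auto.
  destruct (Rle_lt_dec (y*A) (x*B)) as [h|h]; auto.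
  assert (x*A - y*B <= 0) by nra. nra.
Qed.

Lemma local_bound (u : R -> R) a e :
  (forall x, 0 < x -> 0 < u x) ->
  (forall x y, 0 < x -> 0 < y -> (x*u x - y*u y)*(y*u x - x*u y) <= 0) ->
  0 < a -> Rabs (e - a) < a/2 -> a * Rabs (u e - u a) <= 2 * u a * Rabs (e - a).
Proof.
  intros hpos hp ha he.
  assert (he' : a/2 < e).
  { destruct (Rcase_abs (e-a)) as [h|h]; [rewrite Rabs_left in he|rewrite Rabs_right in he]; lra. }
  assert (e0 : 0 < e) by lra.
  pose proof (hpos e e0) as hA. pose proof (hpos a ha) as hB.
  destruct (Rle_lt_dec a e) as [h|h].
  - destruct (ratio_of_prod e a (u e) (u a) e0 ha hA hB h (hp e a e0 ha)) as [h1 h2].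
    rewrite (Rabs_right (e-a)) by lra.
    destruct (Rcase_abs (u e - u a)) as [h3|h3];
      [rewrite Rabs_left by lra | rewrite Rabs_right by lra]; nra.
  - assert (hp' := hp a e ha e0).
    replace ((a * u a - e * u e) * (e * u a - a * u e)) with
      ((a * u a - e * u e) * (e * u a - a * u e)) in hp' by ring.
    assert (hp2 : (a * u a - e * u e) * (e * u a - a * u e) <= 0) by exact hp'.
    destruct (ratio_of_prod a e (u a) (u e) ha e0 hB hA (Rlt_le _ _ h) hp2) as [h1 h2].
    rewrite (Rabs_left (e-a)) by lra.
    destruct (Rcase_abs (u e - u a)) as [h3|h3];
      [rewrite Rabs_left by lra | rewrite Rabs_right by lra]; nra.
Qed.

Lemma u_cont (u : R -> R) a :
  (forall x, 0 < x -> 0 < u x) ->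
  (forall x y, 0 < x -> 0 < y -> (x*u x - y*u y)*(y*u x - x*u y) <= 0) ->
  0 < a -> continuity_pt u a.
Proof.
  intros hpos hp ha.
  unfold continuity_pt, continue_in, limit1_in, limit_in. simpl. unfold R_dist.
  intros eps heps.
  pose proof (hpos a ha) as hB.
  set (d := Rmin (a/2) (eps * a / (4 * u a))).
  assert (hd1 : d <= a/2) by apply Rmin_l.
  assert (hd2 : d <= eps * a / (4 * u a)) by apply Rmin_r.
  assert (hd0 : 0 < d).
  { apply Rmin_pos. lra. apply Rdiv_lt_0_compat; nra. }
  assert (hd3 : d * (4 * u a) <= eps * a).
  { apply (Rmult_le_compat_r (4 * u a)) in hd2; [|lra].
    replace (eps * a / (4 * u a) * (4 * u a)) with (eps * a) in hd2 by (field; lra). exact hd2. }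
  exists d. split; auto.
  intros e [_ he].
  assert (hb := local_bound u a e hpos hp ha ltac:(lra)).
  pose proof (Rabs_pos (u e - u a)). pose proof (Rabs_pos (e - a)).
  assert (a * Rabs (u e - u a) < a * eps) by nra.
  nra.
Qed.
Lemma key A B x y : 0 < A -> 0 < B -> 0 < x -> 0 < y ->
  (Rabs (A - B) <= sqrt (A * B / (x * y)) * Rabs (x - y) <->
   (x*A - y*B)*(y*A - x*B) <= 0).
Proof.
  intros hA hB hx hy.
  set (s := sqrt (A * B / (x * y))).
  assert (hs0 : 0 <= s) by apply sqrt_pos.
  assert (hs2 : s * s = A * B / (x * y)).
  { apply sqrt_sqrt. apply Rlt_le. apply Rdiv_lt_0_compat; nra. }
  assert (hs2' : s * s * (x*y) = A * B).
  { rewrite hs2. field. lra. }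
  clear hs2; clearbody s.
  assert (ha : Rabs (A - B) * Rabs (A-B) = (A-B)*(A-B)).
  { rewrite <- Rabs_mult. apply Rabs_right. apply Rle_ge. apply Rle_0_sqr. }
  assert (hb : Rabs (x - y) * Rabs (x-y) = (x-y)*(x-y)).
  { rewrite <- Rabs_mult. apply Rabs_right. apply Rle_ge. apply Rle_0_sqr. }
  assert (hxy : 0 < x*y) by nra.
  pose proof (Rabs_pos (A-B)). pose proof (Rabs_pos (x-y)).
  split.
  - intro h.
    assert (h2 : Rabs (A-B) * Rabs (A-B) <= (s*Rabs (x-y))*(s*Rabs(x-y))).
    { apply Rmult_le_compat; auto. }
    assert (h3 : (A-B)*(A-B) <= s*s*((x-y)*(x-y))) by nra.
    assert (h4 : (A-B)*(A-B)*(x*y) <= A*B*((x-y)*(x-y))).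
    { rewrite <- hs2'. nra. }
    nra.
  - intro h.
    assert (h4 : (A-B)*(A-B)*(x*y) <= A*B*((x-y)*(x-y))) by nra.
    assert (h3 : (A-B)*(A-B) <= s*s*((x-y)*(x-y))).
    { apply (Rmult_le_reg_r (x*y)); auto. nra. }
    assert (h5 : 0 <= s * Rabs (x-y)) by nra.
    destruct (Rle_lt_dec (Rabs (A-B)) (s*Rabs (x-y))) as [h6|h6]; auto.
    assert (Rabs (A-B) * Rabs (A-B) > (s*Rabs (x-y))*(s*Rabs(x-y))) by nra.
    nra.
Qed.

Lemma stable_prod (f : R -> R) : stable f ->
  forall x y, 0 < x -> 0 < y -> (x*f x - y*f y)*(y*f x - x*f y) <= 0.
Proof.
  intros [hpos hs] x y hx hy.
  apply (key (f x) (f y) x y (hpos x hx) (hpos y hy) hx hy). apply hs; auto.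
Qed.

Lemma eq_equiv (u : R -> R) x e : 0 < x -> 0 < e -> 0 < u e ->
  (e = 1 / (1 / x + u e) <-> e + x * (e * u e) = x).
Proof.
  intros hx he hu.
  assert (hD : 0 < 1 / x + u e).
  { assert (0 < 1/x) by (apply Rdiv_lt_0_compat; lra). lra. }
  split.
  - intro h.
    assert (h2 : e * (1/x + u e) = 1).
    { rewrite h at 1. unfold Rdiv at 1. rewrite Rmult_1_l, Rinv_l; lra. }
    assert (h3 : e * (1/x + u e) * x = x) by (rewrite h2; ring).
    replace (e * (1/x + u e) * x) with (e + x * (e * u e)) in h3 by (field; repeat split; nra).
    exact h3.
  - intro h.
    apply (Rmult_eq_reg_r (1 / x + u e)); [|lra].
    replace (1 / (1 / x + u e) * (1 / x + u e)) with 1 by (field; repeat split; nra).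
    apply (Rmult_eq_reg_r x); [|lra].
    replace (e * (1 / x + u e) * x) with (e + x * (e * u e)) by (field; repeat split; nra).
    lra.
Qed.

Theorem proposition4 (u : R -> R) (u_inf : R) :
  stable u ->
  0 < u_inf ->
  (forall x, 0 < x -> u x <= u_inf) ->
  (forall x, 0 < x ->
     exists! eta, 0 < eta /\ eta = 1 / (1 / x + u eta)) /\
  (exists eta : R -> R,
     (forall x, 0 < x -> 0 < eta x /\ eta x = 1 / (1 / x + u (eta x))) /\
     stable eta).
Proof.
  intros Hs Hui Hb.
  assert (hpos : forall x, 0 < x -> 0 < u x) by (destruct Hs; auto).
  assert (hp := stable_prod u Hs).
  assert (Hmono : forall a b, 0 < a -> a <= b -> a * u a <= b * u b).
  { intros a b ha hab.
    assert (hb : 0 < b) by lra.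
    destruct (ratio_of_prod b a (u b) (u a) hb ha (hpos b hb) (hpos a ha) hab (hp b a hb ha)).
    lra. }
  assert (Hex : forall x, 0 < x -> exists e, 0 < e /\ e + x * (e * u e) = x).
  { intros x hx.
    set (lo := / (2 * (/ x + u_inf))).
    assert (hix : 0 < / x) by (apply Rinv_0_lt_compat; lra).
    assert (hk : 0 < 2 * (/ x + u_inf)) by lra.
    assert (hlo : 0 < lo) by (apply Rinv_0_lt_compat; lra).
    assert (hlok : lo * (2 * (/ x + u_inf)) = 1) by (unfold lo; field; repeat split; nra).
    assert (hxx : x * / x = 1) by (field; lra).
    clearbody lo.
    assert (hlox : lo < x).
    { assert (lo * (2 * (/ x + u_inf)) < x * (2 * (/ x + u_inf))) by nra.
      apply (Rmult_lt_reg_r (2 * (/ x + u_inf))); lra. }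
    set (g := fun e => e + x * (e * u e) - x).
    assert (hglo : g lo < 0).
    { unfold g. pose proof (Hb lo hlo). pose proof (hpos lo hlo).
      assert (x * (lo * u lo) <= x * (lo * u_inf)) by (apply Rmult_le_compat_l; nra).
      assert (lo + x * (lo * u_inf) < x).
      { assert (x * (lo * (2 * (/ x + u_inf))) = x) by (rewrite hlok; ring).
        assert (x * (lo * (2 * (/ x + u_inf))) = 2 * lo * (x * / x) + 2 * (x * (lo * u_inf))) by ring.
        rewrite hxx in *. nra. }
      lra. }
    assert (hgx : 0 < g x).
    { unfold g. pose proof (hpos x hx). assert (0 < x*(x*u x)) by (apply Rmult_lt_0_compat; [lra| apply Rmult_lt_0_compat; lra]). lra. }
    assert (hc : forall a, lo <= a <= x -> continuity_pt g a).
    { intros a [ha1 ha2]. unfold g.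
      apply (continuity_pt_minus (fun e => e + x * (e * u e)) (fun _ => x)).
      - apply (continuity_pt_plus (fun e => e) (fun e => x * (e * u e))).
        + exact (derivable_continuous_pt _ _ (derivable_pt_id a)).
        + apply (continuity_pt_mult (fun _ => x) (fun e => e * u e)).
          * apply continuity_pt_const. intros ? ?; reflexivity.
          * apply (continuity_pt_mult (fun e => e) u).
            -- exact (derivable_continuous_pt _ _ (derivable_pt_id a)).
            -- apply u_cont; auto; lra.
      - apply continuity_pt_const. intros ? ?; reflexivity. }
    destruct (IVT_interv g lo x hc hlox hglo hgx) as [z [hz1 hz2]].
    exists z. split; [lra|]. unfold g in hz2. lra. }
  assert (Huniq : forall x e1 e2, 0 < x -> 0 < e1 -> 0 < e2 ->
            e1 + x * (e1 * u e1) = x -> e2 + x * (e2 * u e2) = x -> e1 = e2).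
  { intros x e1 e2 hx h1 h2 q1 q2.
    destruct (Rtotal_order e1 e2) as [h|[h|h]]; auto.
    - pose proof (Hmono e1 e2 h1 (Rlt_le _ _ h)). nra.
    - pose proof (Hmono e2 e1 h2 (Rlt_le _ _ h)). nra. }
  split.
  - intros x hx.
    destruct (Hex x hx) as [e [he q]].
    exists e. split.
    + split; auto. apply (eq_equiv u x e hx he (hpos e he)). exact q.
    + intros e' [he' q'].
      apply (eq_equiv u x e' hx he' (hpos e' he')) in q'.
      apply (Huniq x e e'); auto.
  - assert (Hex2 : forall x, exists e, 0 < x -> 0 < e /\ e + x * (e * u e) = x).
    { intros x. destruct (Rlt_le_dec 0 x) as [hx|hx].
      - destruct (Hex x hx) as [e He]. exists e. auto.
      - exists 0. intro; lra. }
    set (eta := fun x => proj1_sig (constructive_indefinite_description _ (Hex2 x))).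
    assert (Heta : forall x, 0 < x -> 0 < eta x /\ eta x + x * (eta x * u (eta x)) = x).
    { intros x hx. unfold eta.
      destruct (constructive_indefinite_description _ (Hex2 x)) as [e He]. simpl. auto. }
    clearbody eta.
    exists eta. split.
    + intros x hx. destruct (Heta x hx) as [h1 h2]. split; auto.
      apply (eq_equiv u x (eta x) hx h1 (hpos _ h1)). exact h2.
    + assert (Hmon2 : forall x y, 0 < y -> y < x ->
                eta y <= eta x /\ y * eta x <= x * eta y).
      { intros x y hy hyx.
        assert (hx : 0 < x) by lra.
        destruct (Heta x hx) as [E1 E2]. destruct (Heta y hy) as [F1 F2].
        set (E := eta x) in *. set (F := eta y) in *.
        pose proof (Hmono E F E1) as ME. pose proof (Hmono F E F1) as MF.
        clearbody E F. set (wE := E * u E) in *. set (wF := F * u F) in *.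
        clearbody wE wF.
        assert (pE : 0 < 1 - wE).
        { destruct (Rle_lt_dec (1 - wE) 0); auto.
          assert (x * (1 - wE) <= 0) by nra. lra. }
        assert (pF : 0 < 1 - wF).
        { destruct (Rle_lt_dec (1 - wF) 0); auto.
          assert (y * (1 - wF) <= 0) by nra. lra. }
        assert (hle : F <= E).
        { destruct (Rle_lt_dec F E) as [h|h]; auto.
          specialize (ME (Rlt_le _ _ h)).
          assert (x * (1 - wE) >= x * (1 - wF)) by (apply Rle_ge, Rmult_le_compat_l; lra).
          assert (x * (1 - wF) > y * (1 - wF)) by (apply Rmult_gt_compat_r; lra).
          lra. }
        split; auto.
        specialize (MF hle).
        assert (E = x * (1 - wE)) by lra. assert (F = y * (1 - wF)) by lra.
        assert (y * E = x * y * (1 - wE)) by (rewrite H; ring).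
        assert (x * F = x * y * (1 - wF)) by (rewrite H0; ring).
        assert (0 < x * y) by nra.
        assert (x * y * (1 - wE) <= x * y * (1 - wF)) by (apply Rmult_le_compat_l; lra).
        lra. }
      split.
      * intros x hx. apply Heta; auto.
      * intros x y hx hy.
        destruct (Heta x hx) as [E1 _]. destruct (Heta y hy) as [F1 _].
        apply (key (eta x) (eta y) x y E1 F1 hx hy).
        destruct (Rtotal_order x y) as [h|[h|h]].
        -- destruct (Hmon2 y x hx h) as [h1 h2].
           assert (x * eta x <= y * eta y).
           { apply Rle_trans with (x * eta y). apply Rmult_le_compat_l; lra.
             apply Rmult_le_compat_r; lra. }
           assert (a1 : x * eta x - y * eta y <= 0) by lra.
           assert (a2 : 0 <= y * eta x - x * eta y) by lra.
           revert a1 a2. generalize (x * eta x - y * eta y) (y * eta x - x * eta y).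
           intros; nra.
        -- subst y. assert (a : x * eta x - x * eta x = 0) by ring. rewrite a. lra.
        -- destruct (Hmon2 x y hy h) as [h1 h2].
           assert (y * eta y <= x * eta x).
           { apply Rle_trans with (y * eta x). apply Rmult_le_compat_l; lra.
             apply Rmult_le_compat_r; lra. }
           assert (a1 : 0 <= x * eta x - y * eta y) by lra.
           assert (a2 : y * eta x - x * eta y <= 0) by lra.
           revert a1 a2. generalize (x * eta x - y * eta y) (y * eta x - x * eta y).
           intros; nra.
Qed.
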